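(* Let $T$ be a linear trellis. If $T$ is nonmergeable and one-to-one, then $T$ is connected and fragment one-to-one. Conversely, if $T$ is almost reduced, connected and fragment one-to-one, then $T$ is nonmergeable and one-to-one.
   Context: Let $\mathbb{F}$ be a finite field and $n\ge1$; indices are taken in $\mathbb{Z}_n$. A trellis $T$ of length $n$ over $\mathbb{F}$ consists of pairwise disjoint finite vertex sets $V_i(T)$, $i\in\mathbb{Z}_n$, and edge sets $E_i(T)\subseteq V_i(T)\times\mathbb{F}\times V_{i+1}(T)$; $(v,\alpha,w)\in E_i(T)$ is an edge from $v$ to $w$ with label $\alpha$. Trellises are trim. $T$ is linear if each $V_i(T)$ is an $\mathbb{F}$-vector space and each $E_i(T)$ a subspace. A path of length $m$ is $v_0\alpha_0v_1\cdots\alpha_{m-1}v_m$ with each $(v_j,\alpha_j,v_{j+1})$ an edge; its label sequence is $\alpha_0\cdots\alpha_{m-1}$. A cycle is a closed path of length $n$ starting in $V_0(T)$; $C(T)$ is the set of label sequences of cycles. $T$ is one-to-one if distinct cycles have distinct label sequences; almost reduced if every vertex lies on a cycle; connected if for any two distinct vertices $v,w$ there is a directed path from $v$ to $w$. $T$ is mergeable if for some $i$ and $v\ne w\in V_i(T)$, identifying $v$ and $w$ yields a trellis representing the same code; otherwise nonmergeable. $T$ is fragment one-to-one if any two distinct paths of length $n$ starting in the same vertex set $V_i(T)$ (for any $i$) have distinct label sequences. *)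

(* Defs.v *)
From HB Require Import structures.
From mathcomp Require Import all_boot all_order all_algebra.
Set Implicit Arguments. Unset Strict Implicit. Unset Printing Implicit Defensive.
Import GRing.Theory.
Local Open Scope ring_scope.

(* Vertex set V_i is a
   subset (intended: subspace) of the ambient space 'rV[F]_m; all indices are
   natural numbers read modulo n (so V_i := tV (i %% n)).  Since the levels are
   kept apart by their index, the vertex sets are pairwise disjoint by
   construction: a vertex is a pair (level mod n, vector). *)
Record trellis (F : finFieldType) (n m : nat) := Trellis {
  tV : nat -> pred 'rV[F]_m ;
  tE : nat -> 'rV[F]_m -> F -> 'rV[F]_m -> bool }.

Section Trellis.
Variables (F : finFieldType) (n m : nat) (T : trellis F n m).

Definition vert (i : nat) (v : 'rV[F]_m) : bool := tV T (i %% n)%N v.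
Definition edge (i : nat) (v : 'rV[F]_m) (a : F) (w : 'rV[F]_m) : bool :=
  tE T (i %% n)%N v a w.

Definition well_formed : Prop :=
  forall i v a w, edge i v a w -> vert i v /\ vert i.+1 w.

Definition trim : Prop :=
  (forall i v, vert i v -> exists a w, edge i v a w) /\
  (forall i w, vert i.+1 w -> exists v a, edge i v a w).

Definition linear_trellis : Prop :=
  (forall i, vert i 0 /\
     forall (c : F) v v', vert i v -> vert i v' -> vert i (c *: v + v')) /\
  (forall i, edge i 0 0 0 /\
     forall (c : F) v a w v' a' w', edge i v a w -> edge i v' a' w' ->
       edge i (c *: v + v') (c * a + a') (c *: w + w')).

Definition is_path (i : nat) (vs : seq 'rV[F]_m) (ls : seq F) : Prop :=
  size vs = (size ls).+1 /\
  forall j, (j < size ls)%N ->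
    edge (i + j) (nth 0 vs j) (nth 0 ls j) (nth 0 vs j.+1).

Definition is_cycle (vs : seq 'rV[F]_m) (ls : seq F) : Prop :=
  is_path 0 vs ls /\ size ls = n /\ nth 0 vs 0 = nth 0 vs n.

Definition code (ls : seq F) : Prop := exists vs, is_cycle vs ls.

Definition one_to_one : Prop :=
  forall vs vs' ls, is_cycle vs ls -> is_cycle vs' ls -> vs = vs'.

Definition almost_reduced : Prop :=
  forall i v, vert i v -> exists vs ls, is_cycle vs ls /\ nth 0 vs (i %% n) = v.

Definition connected : Prop :=
  forall i j v w, vert i v -> vert j w ->
    ((i %% n)%N, v) <> ((j %% n)%N, w) ->
    exists vs ls, [/\ is_path i vs ls, nth 0 vs 0 = v,
                      nth 0 vs (size ls) = w & ((i + size ls) %% n = j %% n)%N].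

Definition fragment_one_to_one : Prop :=
  forall i vs vs' ls, size ls = n -> is_path i vs ls -> is_path i vs' ls ->
    vs = vs'.

Definition merge_eq (i : nat) (v w : 'rV[F]_m) (k : nat) (x y : 'rV[F]_m) : Prop :=
  x = y \/ ((k %% n = i %% n)%N /\ ((x = v /\ y = w) \/ (x = w /\ y = v))).

(* code of the trellis obtained from T by identifying v and w in V_i:
   its cycles are n edges e_j = (as_j, ls_j, bs_j) of E_j whose consecutive
   endpoints agree in the merged trellis *)
Definition merged_code (i : nat) (v w : 'rV[F]_m) (ls : seq F) : Prop :=
  size ls = n /\
  exists as_ bs : seq 'rV[F]_m, [/\ size as_ = n, size bs = n &
    forall j, (j < n)%N ->
      edge j (nth 0 as_ j) (nth 0 ls j) (nth 0 bs j) /\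
      merge_eq i v w j.+1 (nth 0 bs j) (nth 0 as_ (j.+1 %% n))].

Definition mergeable : Prop :=
  exists i v w, [/\ vert i v, vert i w, v <> w &
    forall ls, merged_code i v w ls <-> code ls].

Definition nonmergeable : Prop := ~ mergeable.

End Trellis.

(* Main.v *)
Require Import Defs.
From HB Require Import structures.
From mathcomp Require Import all_boot all_order all_algebra.
From mathcomp Require Import zify.
Set Implicit Arguments. Unset Strict Implicit. Unset Printing Implicit Defensive.
Import GRing.Theory.
Local Open Scope ring_scope.

Definition gpath (F : finFieldType) (n m : nat) (T : trellis F n m) (a L : nat)
  (A : nat -> 'rV[F]_m) (l : nat -> F) : Prop :=
  forall k, (k < L)%N -> edge T (a + k) (A k) (l k) (A k.+1).

Lemma edge_mod (F : finFieldType) (n m : nat) (T : trellis F n m) a b v x w :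
  (a %% n = b %% n)%N -> edge T a v x w = edge T b v x w.
Proof. by move=> e; rewrite /edge e. Qed.

Lemma vert_mod (F : finFieldType) (n m : nat) (T : trellis F n m) a b v :
  (a %% n = b %% n)%N -> vert T a v = vert T b v.
Proof. by move=> e; rewrite /vert e. Qed.

Lemma gpath_mod (F : finFieldType) (n m : nat) (T : trellis F n m) a b L A l :
  (a %% n = b %% n)%N -> gpath T a L A l -> gpath T b L A l.
Proof.
move=> e g k kL; rewrite (@edge_mod _ _ _ _ _ (a + k)); first exact: g.
by rewrite -modnDml -e modnDml.
Qed.

Lemma gpath_ext (F : finFieldType) (n m : nat) (T : trellis F n m) a L A A' l l' :
  (forall k, (k <= L)%N -> A k = A' k) -> (forall k, (k < L)%N -> l k = l' k) ->
  gpath T a L A l -> gpath T a L A' l'.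
Proof.
move=> eA el g k kL; rewrite -eA ?(ltnW kL) // -eA // -el //; exact: g.
Qed.

Lemma gpath_lin (F : finFieldType) (n m : nat) (T : trellis F n m) a L A A' l l' c :
  linear_trellis T -> gpath T a L A l -> gpath T a L A' l' ->
  gpath T a L (fun k => c *: A k + A' k) (fun k => c * l k + l' k).
Proof. by move=> lin g g' k kL; apply: ((lin.2 _).2); [apply: g | apply: g']. Qed.

Lemma gpath_add (F : finFieldType) (n m : nat) (T : trellis F n m) a L A A' l l' :
  linear_trellis T -> gpath T a L A l -> gpath T a L A' l' ->
  gpath T a L (fun k => A k + A' k) (fun k => l k + l' k).
Proof.
move=> lin g g'; apply: gpath_ext (gpath_lin 1 lin g g') => k _ /=.
  by rewrite scale1r. by rewrite mul1r.
Qed.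

Lemma gpath_sub (F : finFieldType) (n m : nat) (T : trellis F n m) a L A A' l l' :
  linear_trellis T -> gpath T a L A l -> gpath T a L A' l' ->
  gpath T a L (fun k => A k - A' k) (fun k => l k - l' k).
Proof.
move=> lin g g'; apply: gpath_ext (gpath_lin (-1) lin g' g) => k _ /=.
  by rewrite scaleN1r addrC. by rewrite mulN1r addrC.
Qed.

Lemma gpath0 (F : finFieldType) (n m : nat) (T : trellis F n m) a L :
  linear_trellis T -> gpath T a L (fun _ => 0) (fun _ => 0).
Proof. by move=> lin k _; apply: (lin.2 _).1. Qed.

Lemma succ_mod n x : (x.+1 %% n = (x %% n).+1 %% n)%N.
Proof. by rewrite -addn1 -modnDml addn1. Qed.

Lemma gpath_rot (F : finFieldType) (n m : nat) (T : trellis F n m) a A l s :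
  (0 < n)%N -> gpath T a n A l -> A n = A 0 ->
  gpath T (a + s) n (fun t => A ((t + s) %% n)%N) (fun t => l ((t + s) %% n)%N).
Proof.
move=> n0 g cl t tn /=.
have kn : ((t + s) %% n < n)%N by rewrite ltn_pmod.
rewrite (@edge_mod _ _ _ _ _ (a + (t + s) %% n)); last first.
  by rewrite modnDmr; congr (_ %% _)%N; lia.
have -> : A ((t.+1 + s) %% n)%N = A ((t + s) %% n).+1.
  rewrite addSn succ_mod.
  case: (ltnP ((t + s) %% n).+1 n) => h; first by rewrite modn_small.
  have e : ((t + s) %% n).+1 = n by apply/eqP; rewrite eqn_leq h kn.
  by rewrite e modnn cl.
exact: g.
Qed.

Lemma rot_back1 n s t : (0 < n)%N -> (s <= n)%N -> (t < n)%N ->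
  (((t + s) %% n + (n - s)) %% n = t)%N.
Proof.
move=> n0 sn tn; rewrite modnDml -addnA subnKC // modnDr modn_small //.
Qed.

Lemma rot_back2 n s t : (0 < n)%N -> (s <= n)%N -> (t < n)%N ->
  (((t + (n - s)) %% n + s) %% n = t)%N.
Proof.
move=> n0 sn tn; rewrite modnDml -addnA subnK // modnDr modn_small //.
Qed.

Lemma is_path_gpath (F : finFieldType) (n m : nat) (T : trellis F n m) i vs ls :
  is_path T i vs ls -> gpath T i (size ls) (nth 0 vs) (nth 0 ls).
Proof. by case. Qed.

Lemma gpath_is_path (F : finFieldType) (n m : nat) (T : trellis F n m) i L A l :
  gpath T i L A l -> is_path T i (mkseq A L.+1) (mkseq l L).
Proof.
move=> g; split; first by rewrite !size_mkseq.
rewrite size_mkseq => j jL.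
have j1 : (j < L.+1)%N by apply: ltnW.
rewrite (nth_mkseq _ _ jL) (nth_mkseq _ _ j1).
rewrite (@nth_mkseq _ _ _ L.+1 j.+1) ?ltnS //; exact: g.
Qed.

Lemma gpath_fwd (F : finFieldType) (n m : nat) (T : trellis F n m) a L x :
  well_formed T -> trim T -> vert T a x ->
  exists A l, [/\ gpath T a L A l, A 0%N = x & vert T (a + L) (A L)].
Proof.
move=> wf tr vx; elim: L => [|L [A [l [g A0 vL]]]].
  by exists (fun _ => x), (fun _ => 0); split => //; rewrite addn0.
have [b [z e]] := tr.1 _ _ vL.
exists (fun k => if (k <= L)%N then A k else z), (fun k => if (k < L)%N then l k else b).
split => /=; last by rewrite ltnn addnS; exact: (wf _ _ _ _ e).2.
- move=> k; rewrite ltnS /= => kL; case: (ltngtP k L) kL => // [kL _|-> _].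
    exact: g.
  by [].
- by [].
Qed.

Lemma gpath_back (F : finFieldType) (n m : nat) (T : trellis F n m) a L y :
  well_formed T -> trim T -> vert T (a + L) y ->
  exists A l, gpath T a L A l /\ A L = y.
Proof.
move=> wf tr; elim: L y => [|L IH] y vy.
  by exists (fun _ => y), (fun _ => 0); split.
rewrite addnS in vy.
have [v [b e]] := tr.2 _ _ vy.
have [A [l [g AL]]] := IH _ (wf _ _ _ _ e).1.
exists (fun k => if (k <= L)%N then A k else y), (fun k => if (k < L)%N then l k else b).
split => /=; last by rewrite ltnn.
move=> k; rewrite ltnS /= => kL; case: (ltngtP k L) kL => // [kL _|-> _].
  exact: g.
by rewrite AL.
Qed.

Lemma gpath_cat (F : finFieldType) (n m : nat) (T : trellis F n m) a L1 L2 A1 l1 A2 l2 :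
  gpath T a L1 A1 l1 -> gpath T (a + L1) L2 A2 l2 -> A1 L1 = A2 0%N ->
  gpath T a (L1 + L2) (fun k => if (k <= L1)%N then A1 k else A2 (k - L1)%N)
                      (fun k => if (k < L1)%N then l1 k else l2 (k - L1)%N).
Proof.
move=> g1 g2 e k kL /=.
case: (ltnP k L1) => h.
  by rewrite (ltnW h); exact: g1.
have t2 : (k - L1 < L2)%N by lia.
have := g2 _ t2; rewrite (_ : (a + L1 + (k - L1))%N = (a + k)%N); last by lia.
rewrite (_ : (k - L1).+1 = (k.+1 - L1))%N; last by lia.
rewrite leq_eqVlt ltnNge h orbF.
case: eqP => [->|//]; by rewrite subnn e.
Qed.

Lemma code_closed (F : finFieldType) (n m : nat) (T : trellis F n m) i ls :
  (0 < n)%N -> code T ls -> size ls = n /\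
  exists A l, [/\ gpath T i n A l, A n = A 0%N &
     forall t, (t < n)%N -> l t = nth 0 ls ((t + i %% n) %% n)%N].
Proof.
move=> n0 [vs [p [sz cl]]]; split => //.
have g := is_path_gpath p; rewrite sz in g.
have := gpath_rot (i %% n) n0 g (esym cl) => g'.
exists (fun t => nth 0 vs ((t + i %% n) %% n)%N), (fun t => nth 0 ls ((t + i %% n) %% n)%N).
split => //.
- by apply: gpath_mod g'; rewrite add0n modn_mod.
- by rewrite modnDl add0n.
Qed.

Lemma closed_code (F : finFieldType) (n m : nat) (T : trellis F n m) i A l ls :
  (0 < n)%N -> gpath T i n A l -> A n = A 0%N -> size ls = n ->
  (forall t, (t < n)%N -> l t = nth 0 ls ((t + i %% n) %% n)%N) -> code T ls.
Proof.
move=> n0 g cl sz el.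
have sn : (i %% n <= n)%N by rewrite ltnW // ltn_pmod.
have g' := gpath_rot (n - i %% n) n0 g cl.
have g0 : gpath T 0 n (fun t => A ((t + (n - i %% n)) %% n)%N)
                      (fun t => l ((t + (n - i %% n)) %% n)%N).
  apply: gpath_mod g'; rewrite -modnDml subnKC // modnn mod0n //.
exists (mkseq (fun t => A ((t + (n - i %% n)) %% n)%N) n.+1).
have -> : ls = mkseq (fun t => l ((t + (n - i %% n)) %% n)%N) n.
  apply: (@eq_from_nth _ 0); first by rewrite size_mkseq.
  move=> t; rewrite sz => tn; rewrite nth_mkseq // el ?ltn_pmod //.
  by rewrite rot_back2.
split; first exact: gpath_is_path.
split; first by rewrite size_mkseq.
by rewrite !nth_mkseq // modnDl.
Qed.

Lemma code_merged (F : finFieldType) (n m : nat) (T : trellis F n m) i a b ls :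
  (0 < n)%N -> code T ls -> merged_code T i a b ls.
Proof.
move=> n0 [vs [[szv p] [sz cl]]]; split => //.
exists (mkseq (nth 0 vs) n), (mkseq (fun k => nth 0 vs k.+1) n).
split; rewrite ?size_mkseq // => j jn.
rewrite !nth_mkseq ?ltn_pmod //; split.
  by have := p j; rewrite sz add0n; apply.
left; case: (ltnP j.+1 n) => h; first by rewrite modn_small.
have e : j.+1 = n by apply/eqP; rewrite eqn_leq h jn.
by rewrite e modnn.
Qed.

Lemma merged_path (F : finFieldType) (n m : nat) (T : trellis F n m) i a b ls :
  (0 < n)%N -> merged_code T i a b ls -> size ls = n /\
  exists A l, [/\ gpath T i n A l,
     (forall t, (t < n)%N -> l t = nth 0 ls ((t + i %% n) %% n)%N) &
     A n = A 0%N \/ (A n = a /\ A 0%N = b) \/ (A n = b /\ A 0%N = a)].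
Proof.
move=> n0 [sz [as_ [bs [sa sb H]]]]; split => //.
set s := (i %% n)%N.
have sn : (s < n)%N by rewrite ltn_pmod.
exists (fun t => if (t < n)%N then nth 0 as_ ((t + s) %% n)%N else nth 0 bs ((n.-1 + s) %% n)%N).
exists (fun t => nth 0 ls ((t + s) %% n)%N).
split => //.
- move=> t tn /=; rewrite tn.
  have kn : ((t + s) %% n < n)%N by rewrite ltn_pmod.
  have [e me] := H _ kn.
  rewrite (@edge_mod _ _ _ _ _ ((t + s) %% n)%N); last first.
    by rewrite modn_mod /s modnDmr addnC.
  case: (ltnP t.+1 n) => h.
    suff -> : nth 0 as_ ((t.+1 + s) %% n)%N = nth 0 bs ((t + s) %% n)%N by [].
    case: me => [->|[c _]].
      by rewrite -succ_mod addSn.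
    exfalso; move: c; rewrite -succ_mod /s => c.
    have : (t.+1 + s == 0 + s %[mod n])%N.
      by rewrite addSn add0n /s c modn_mod.
    by rewrite eqn_modDr mod0n modn_small // => /eqP.
  have et : t = n.-1 by lia.
  by rewrite et in e *.
- rewrite ltnn n0.
  have jn : ((n.-1 + s) %% n < n)%N by rewrite ltn_pmod.
  have [_ me] := H _ jn.
  have ej : (((n.-1 + s) %% n).+1 %% n = s %% n)%N.
    by rewrite -succ_mod -addSn prednK // modnDl.
  rewrite ej in me; rewrite add0n.
  case: me => [->|[_ [[-> ->]|[-> ->]]]]; by auto.
Qed.

Lemma path_merged (F : finFieldType) (n m : nat) (T : trellis F n m) i a b A l :
  (0 < n)%N -> gpath T i n A l -> A 0%N = a -> A n = b ->
  merged_code T i a b (mkseq (fun t => l ((t + (n - i %% n)) %% n)%N) n).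
Proof.
move=> n0 g A0 An.
set s := (i %% n)%N.
have sn : (s < n)%N by rewrite ltn_pmod.
split; first by rewrite size_mkseq.
exists (mkseq (fun t => A ((t + (n - s)) %% n)%N) n).
exists (mkseq (fun t => A ((t + (n - s)) %% n).+1) n).
split; rewrite ?size_mkseq // => j jn.
have kn : ((j + (n - s)) %% n < n)%N by rewrite ltn_pmod.
rewrite !nth_mkseq ?ltn_pmod //; split.
  rewrite (@edge_mod _ _ _ _ _ (i + (j + (n - s)) %% n)%N); first exact: g.
  rewrite -modnDml modnDmr -/s.
  have -> : (s + (j + (n - s)) = j + n)%N by lia.
  by rewrite modnDr.
rewrite modnDml.
case: (ltnP ((j + (n - s)) %% n).+1 n) => h.
  by left; rewrite addSn succ_mod (modn_small h).
have e : ((j + (n - s)) %% n).+1 = n by apply/eqP; rewrite eqn_leq h kn.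
right; split.
  have : ((j.+1 + (n - s)) %% n = 0)%N by rewrite addSn succ_mod e modnn.
  move=> h0.
  have : (j.+1 + (n - s) + s == 0 + s %[mod n])%N.
    by rewrite eqn_modDr h0 mod0n.
  rewrite -addnA subnK ?(ltnW sn) // modnDr add0n => /eqP ->.
  by rewrite /s modn_mod.
right; split; first by rewrite e.
by rewrite addSn succ_mod e modnn.
Qed.

Lemma closed_cycle (F : finFieldType) (n m : nat) (T : trellis F n m) i A l :
  (0 < n)%N -> gpath T i n A l -> A n = A 0%N ->
  is_cycle T (mkseq (fun t => A ((t + (n - i %% n)) %% n)%N) n.+1)
             (mkseq (fun t => l ((t + (n - i %% n)) %% n)%N) n).
Proof.
move=> n0 g cl.
have sn : (i %% n <= n)%N by rewrite ltnW // ltn_pmod.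
have g' := gpath_rot (n - i %% n) n0 g cl.
have g0 : gpath T 0 n (fun t => A ((t + (n - i %% n)) %% n)%N)
                      (fun t => l ((t + (n - i %% n)) %% n)%N).
  apply: gpath_mod g'; rewrite -modnDml subnKC // modnn mod0n //.
split; first exact: gpath_is_path.
split; first by rewrite size_mkseq.
by rewrite !nth_mkseq // modnDl.
Qed.

Lemma gpath_vert0 (F : finFieldType) (n m : nat) (T : trellis F n m) i A l :
  (0 < n)%N -> well_formed T -> gpath T i n A l -> vert T i (A 0%N).
Proof. by move=> n0 wf g; have := (wf _ _ _ _ (g 0%N n0)).1; rewrite addn0. Qed.

Lemma gpath_vertn (F : finFieldType) (n m : nat) (T : trellis F n m) i A l :
  (0 < n)%N -> well_formed T -> gpath T i n A l -> vert T i (A n).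
Proof.
move=> n0 wf g; have nn : (n.-1 < n)%N by rewrite prednK.
have := (wf _ _ _ _ (g _ nn)).2; rewrite -addnS prednK //.
by rewrite (@vert_mod _ _ _ _ _ i) // modnDr.
Qed.

Lemma frag_of_gpath (F : finFieldType) (n m : nat) (T : trellis F n m) :
  (forall i A A' l, gpath T i n A l -> gpath T i n A' l ->
     forall k, (k <= n)%N -> A k = A' k) -> fragment_one_to_one T.
Proof.
move=> H i vs vs' ls sz p p'.
have g := is_path_gpath p; have g' := is_path_gpath p'; rewrite sz in g g'.
have [s1 _] := p; have [s2 _] := p'.
apply: (@eq_from_nth _ 0); first by rewrite s1 s2.
by move=> k; rewrite s1 sz ltnS => kn; apply: H g g' k kn.
Qed.

Lemma gpath_of_frag (F : finFieldType) (n m : nat) (T : trellis F n m) :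
  fragment_one_to_one T ->
  forall i A A' l, gpath T i n A l -> gpath T i n A' l ->
     forall k, (k <= n)%N -> A k = A' k.
Proof.
move=> fr i A A' l g g' k kn.
have := fr i _ _ _ (size_mkseq l n) (gpath_is_path g) (gpath_is_path g').
move=> /(congr1 (fun s => nth 0 s k)); rewrite !nth_mkseq //.
Qed.

Lemma part1_frag (F : finFieldType) (n m : nat) (T : trellis F n m) :
  (0 < n)%N -> well_formed T -> linear_trellis T ->
  nonmergeable T -> one_to_one T -> fragment_one_to_one T.
Proof.
move=> n0 wf lin nm oo; apply: frag_of_gpath => i A A' l g g'.
set D := fun k => A k - A' k.
have gD : gpath T i n D (fun _ => 0).
  by apply: gpath_ext (gpath_sub lin g g') => // k _; rewrite subrr.
suff D0 : forall k, (k <= n)%N -> D k = 0.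
  by move=> k kn; apply/eqP; rewrite -subr_eq0; apply/eqP; exact: D0.
have sn : (i %% n <= n)%N by rewrite ltnW // ltn_pmod.
case: (eqVneq (D n) (D 0%N)) => cl.
  have c1 := closed_cycle n0 gD cl.
  have c0 := closed_cycle n0 (@gpath0 _ _ _ T 0%N n lin) (erefl _).
  have Dk : forall k, (k < n)%N -> D k = 0.
    move=> k kn.
    have := oo _ _ _ c1 c0 => /(congr1 (fun s => nth 0 s ((k + i %% n) %% n)%N)).
    have tn : ((k + i %% n) %% n < n.+1)%N by rewrite ltnS ltnW // ltn_pmod.
    rewrite !(nth_mkseq _ _ tn) rot_back1 //.
  move=> k; rewrite leq_eqVlt => /orP [/eqP ->|]; last exact: Dk.
  by rewrite cl Dk.
exfalso; apply: nm; exists i, (D 0%N), (D n); split.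
- exact: gpath_vert0 gD.
- exact: gpath_vertn gD.
- by move=> e; rewrite e eqxx in cl.
move=> ls; split; last exact: code_merged.
case/(merged_path n0) => sz [A2 [l2 [g2 el2 cs]]].
case: cs => [c|[[c1 c2]|[c1 c2]]].
- exact: closed_code g2 c sz el2.
- apply: (@closed_code _ _ _ T i (fun k => A2 k + D k) l2) => //.
    by apply: gpath_ext (gpath_add lin g2 gD) => // k _; rewrite addr0.
  by rewrite /= c1 c2 addrC.
- apply: (@closed_code _ _ _ T i (fun k => A2 k - D k) l2) => //.
    by apply: gpath_ext (gpath_sub lin g2 gD) => // k _; rewrite subr0.
  by rewrite /= c1 c2 !subrr.
Qed.

From Stdlib Require Import Classical.

Definition reachS (F : finFieldType) (n m : nat) (T : trellis F n m) i x :=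
  exists A l, [/\ gpath T i n A l, A 0%N = 0 & A n = x].
Definition reachK (F : finFieldType) (n m : nat) (T : trellis F n m) i x :=
  exists A l, [/\ gpath T i n A l, A 0%N = x & A n = 0].

Lemma part1_S (F : finFieldType) (n m : nat) (T : trellis F n m) :
  (0 < n)%N -> well_formed T -> trim T -> linear_trellis T ->
  nonmergeable T -> forall i x, vert T i x -> reachS T i x.
Proof.
move=> n0 wf tr lin nm i.
have SK : forall x, vert T i x -> reachS T i x \/ reachK T i x.
  move=> x vx.
  case: (classic (reachS T i x)) => hS; first by left.
  case: (classic (reachK T i x)) => hK; first by right.
  exfalso; apply: nm; exists i, 0, x; split => //.
  - exact: (lin.1 i).1.
  - move=> e; apply: hS; exists (fun _ => 0), (fun _ => 0); split => //.
    exact: gpath0.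
  move=> ls; split; last exact: code_merged.
  case/(merged_path n0) => sz [A2 [l2 [g2 el2 cs]]].
  case: cs => [c|[[c1 c2]|[c1 c2]]].
  - exact: closed_code g2 c sz el2.
  - by exfalso; apply: hK; exists A2, l2.
  - by exfalso; apply: hS; exists A2, l2.
move=> y vy; apply: NNPP => hy.
have Ky : reachK T i y by case: (SK y vy).
have allK : forall x, vert T i x -> reachK T i x.
  move=> x vx; apply: NNPP => hx.
  have Sx : reachS T i x by case: (SK x vx).
  have vxy : vert T i (x + y) by have := (lin.1 i).2 1 x y vx vy; rewrite scale1r.
  case: (SK _ vxy) => [[A [l [g A0 An]]]|[A [l [g A0 An]]]].
  - apply: hy; case: Sx => [B [lb [gb B0 Bn]]].
    exists (fun k => A k - B k), (fun k => l k - lb k); split.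
    + exact: gpath_sub.
    + by rewrite /= A0 B0 subrr.
    + by rewrite /= An Bn addrC addKr.
  - apply: hx; case: Ky => [B [lb [gb B0 Bn]]].
    exists (fun k => A k - B k), (fun k => l k - lb k); split.
    + exact: gpath_sub.
    + by rewrite /= A0 B0 addrK.
    + by rewrite /= An Bn subrr.
have vy' : vert T (i + n) y by rewrite (@vert_mod _ _ _ _ (i + n) i) ?modnDr.
have [A [l [g An]]] := gpath_back wf tr vy'.
have [B [lb [gb B0 Bn]]] := allK _ (gpath_vert0 n0 wf g).
apply: hy; exists (fun k => A k - B k), (fun k => l k - lb k); split.
- exact: gpath_sub.
- by rewrite /= B0 subrr.
- by rewrite /= An Bn subr0.
Qed.

Lemma part1_conn (F : finFieldType) (n m : nat) (T : trellis F n m) :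
  (0 < n)%N -> well_formed T -> trim T -> linear_trellis T ->
  nonmergeable T -> connected T.
Proof.
move=> n0 wf tr lin nm i j v w vv vw _.
set d := (j %% n + (n - i %% n))%N.
have [P [lp [gP P0 vPd]]] := gpath_fwd d wf tr vv.
have [Q [lq [gQ Q0 vQn]]] := gpath_fwd n wf tr vPd.
have vw' : vert T (i + d) w.
  rewrite (@vert_mod _ _ _ _ (i + d) j) //.
  have sn : (i %% n <= n)%N by rewrite ltnW // ltn_pmod.
  by rewrite /d -modnDml addnCA subnKC // modnDr modn_mod.
have vz : vert T (i + d) (Q n) by rewrite (@vert_mod _ _ _ _ (i + d) (i + d + n)) ?modnDr.
have vwz : vert T (i + d) (w - Q n).
  by have := (lin.1 (i + d)%N).2 (-1) (Q n) w vz vw'; rewrite scaleN1r addrC.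
have [Z [lz [gZ Z0 Zn]]] := part1_S n0 wf tr lin nm vwz.
have gQZ := gpath_add lin gQ gZ.
have gC := gpath_cat gP gQZ.
have e : P d = Q 0%N + Z 0%N by rewrite Q0 Z0 addr0.
have gC' := gC e.
set C := (fun k => if (k <= d)%N then P k else Q (k - d)%N + Z (k - d)%N) in gC'.
set lc := (fun k => if (k < d)%N then lp k else lq (k - d)%N + lz (k - d)%N) in gC'.
exists (mkseq C (d + n).+1), (mkseq lc (d + n)).
rewrite size_mkseq; split.
- exact: gpath_is_path.
- by rewrite nth_mkseq // /C leq0n.
- rewrite nth_mkseq // /C.
  case: (leqP (d + n) d) => h; first by lia.
  by rewrite addKn Zn addrC subrK.
- have sn : (i %% n <= n)%N by rewrite ltnW // ltn_pmod.
  by rewrite addnA modnDr /d -modnDml addnCA subnKC // modnDr modn_mod.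
Qed.

Lemma closed_through (F : finFieldType) (n m : nat) (T : trellis F n m) i x :
  (0 < n)%N -> almost_reduced T -> vert T i x ->
  exists C lc, [/\ gpath T i n C lc, C 0%N = x & C n = x].
Proof.
move=> n0 ar vx; have [vs [ls [[p [sz cl]] ex]]] := ar _ _ vx.
have g := is_path_gpath p; rewrite sz in g.
have g' := gpath_rot (i %% n) n0 g (esym cl).
exists (fun t => nth 0 vs ((t + i %% n) %% n)%N), (fun t => nth 0 ls ((t + i %% n) %% n)%N).
split.
- by apply: gpath_mod g'; rewrite add0n modn_mod.
- by rewrite add0n modn_mod.
- by rewrite modnDl modn_mod.
Qed.

Lemma reachS_step (F : finFieldType) (n m : nat) (T : trellis F n m) i u P lp :
  (0 < n)%N -> well_formed T -> linear_trellis T -> almost_reduced T ->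
  reachS T i u -> gpath T i n P lp -> P 0%N = u -> reachS T i (P n).
Proof.
move=> n0 wf lin ar [Z [lz [gZ Z0 Zn]]] g P0.
have [C [lc [gC C0 Cn]]] := closed_through n0 ar (gpath_vert0 n0 wf g).
have g1 := gpath_sub lin g gC.
have g2 := gpath_add lin g1 gZ.
exists (fun k => P k - C k + Z k), (fun k => lp k - lc k + lz k); split => //=.
  by rewrite C0 Z0 subrr addr0.
by rewrite Cn Zn P0 subrK.
Qed.

Lemma conn_reachS (F : finFieldType) (n m : nat) (T : trellis F n m) i v w :
  (0 < n)%N -> well_formed T -> linear_trellis T -> almost_reduced T ->
  connected T -> vert T i v -> vert T i w -> v <> w -> reachS T i (w - v).
Proof.
move=> n0 wf lin ar cn vv vw nvw.
have v0 : vert T i 0 := (lin.1 i).1.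
have vd : vert T i (w - v).
  by have := (lin.1 i).2 (-1) v w vv vw; rewrite scaleN1r addrC.
have neq : ((i %% n)%N, 0) <> ((i %% n)%N, w - v).
  case=> /eqP; rewrite eq_sym subr_eq0 => /eqP e; exact: nvw (esym e).
have [vs [ls [p s0 sL ml]]] := cn _ _ _ _ v0 vd neq.
have g := is_path_gpath p.
set L := size ls in g sL ml.
have dv : (n %| L)%N.
  rewrite /dvdn; move: ml => /eqP; rewrite -{2}[i]addn0 eqn_modDl mod0n.
  by [].
have H : forall k, (k * n <= L)%N -> reachS T i (nth 0 vs (k * n)%N).
  elim=> [_|k IH kL].
    rewrite mul0n s0; exists (fun _ => 0), (fun _ => 0); split => //.
    exact: gpath0.
  have kL' : (k * n <= L)%N by apply: leq_trans kL; rewrite leq_mul2r leqnSn orbT.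
  have gk : gpath T i n (fun t => nth 0 vs (k * n + t)%N) (fun t => nth 0 ls (k * n + t)%N).
    move=> t tn.
    rewrite (@edge_mod _ _ _ _ _ (i + (k * n + t))%N).
      rewrite addnS; apply: g.
      by apply: leq_trans kL; rewrite mulSn; lia.
    by rewrite addnCA modnMDl.
  have := reachS_step n0 wf lin ar (IH kL') gk; rewrite addn0 => h.
  by have := h erefl; rewrite mulSn addnC.
have := H (L %/ n)%N; rewrite divnK // leqnn => h.
by have := h erefl; rewrite sL.
Qed.

Lemma part2_nm (F : finFieldType) (n m : nat) (T : trellis F n m) :
  (0 < n)%N -> well_formed T -> linear_trellis T -> almost_reduced T ->
  connected T -> fragment_one_to_one T -> nonmergeable T.
Proof.
move=> n0 wf lin ar cn fr [i [v [w [vv vw nvw H]]]].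
have [C [lc [gC C0 Cn]]] := closed_through n0 ar vv.
have [Z [lz [gZ Z0 Zn]]] := conn_reachS n0 wf lin ar cn vv vw nvw.
have gP := gpath_add lin gC gZ.
set P := (fun k => C k + Z k) in gP.
set lP := (fun k => lc k + lz k) in gP.
have P0 : P 0%N = v by rewrite /P C0 Z0 addr0.
have Pn : P n = w by rewrite /P Cn Zn addrC subrK.
have mc := path_merged n0 gP P0 Pn.
have [sz [A' [l' [g' cl el]]]] := code_closed i n0 ((H _).1 mc).
have sn : (i %% n <= n)%N by rewrite ltnW // ltn_pmod.
have g'' : gpath T i n A' lP.
  apply: gpath_ext g' => // t tn; rewrite el // nth_mkseq ?ltn_pmod //.
  by rewrite rot_back1.
have e := gpath_of_frag fr gP g''.
apply: nvw; rewrite -P0 -Pn (e 0%N) // (e n) // cl.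
Qed.

Unset Implicit Arguments.
Local Close Scope ring_scope.

Theorem mainTheorem14 (F : finFieldType) (n m : nat) (T : trellis F n m) :
  (0 < n)%N -> well_formed T -> trim T -> linear_trellis T ->
  ((nonmergeable T /\ one_to_one T) ->
     connected T /\ fragment_one_to_one T) /\
  ((almost_reduced T /\ connected T /\ fragment_one_to_one T) ->
     nonmergeable T /\ one_to_one T).
Proof.
move=> n0 wf tr lin; split.
  case=> nm oo; split; first exact: part1_conn.
  exact: part1_frag.
case=> ar [cn fr]; split; first exact: part2_nm.
by move=> vs vs' ls [p [sz _]] [p' _]; apply: fr p p'.
Qed.
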